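(* Assume Assumption 1 and Assumption 2 with $\delta>1/10$. Conditioned on $S_L$ and $S_R$, for any node $u\in L$, the local clustering coefficient of $u$ in the projected graph satisfies, as $n_L,n_R\to\infty$, $$C(u)=\frac{1}{1+\frac{M_{R2}^2}{M_{R3}M_{R1}}\,w_u}+o(1).$$
   Context: Model: left nodes $L$ ($|L|=n_L$), right nodes $R$ ($|R|=n_R$), weight sequences $S_L=(w_u)_{u\in L}$, $S_R=(w_v)_{v\in R}$ of positive reals; $M_{Lk}=\frac1{n_L}\sum_{u\in L}w_u^k$, $M_{Rk}=\frac1{n_R}\sum_{v\in R}w_v^k$. The random bipartite graph $G_b=(L\sqcup R,E_b)$ contains each edge $(u,v)$, $u\in L$, $v\in R$, independently with probability $\min\left(\frac{w_uw_v}{n_RM_{R1}},1\right)$. The projected graph is $G=(L,E)$ with $(u,u')\in E$ for distinct $u,u'\in L$ iff there is $z\in R$ with $(u,z),(u',z)\in E_b$. Local clustering coefficient (conditional-probability version): $C(u)=\Pr[(v,w)\in E\mid (u,v)\in E,(u,w)\in E]$, where $v,w$ are distinct nodes of $L\setminus\{u\}$ forming a random wedge centered at $u$ (i.e. $v,w$ chosen uniformly at random, independently of the graph, and conditioned on both edges $(u,v),(u,w)$ being present), all probabilities conditional on $S_L,S_R$. Assumption 1: $\frac{w_uw_v}{n_RM_{R1}}\le1$ for all $u\in L,v\in R$. Assumption 2 (parameter $\delta>0$), as $n_L,n_R\to\infty$: $\max(S_L\cup S_R)=O(n_R^{1/2-\delta})$, $\min S_L=\Omega(1)$, $M_{R2}=O(M_{R1}^2)$,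 $M_{R4}=O(n_R^{1-2\delta})$. *)

(* Defs.v *)
From HB Require Import structures.
From mathcomp Require Import all_boot all_order all_algebra.
From mathcomp Require Import all_classical all_reals all_analysis.
Set Implicit Arguments. Unset Strict Implicit. Unset Printing Implicit Defensive.
Import Order.TTheory GRing.Theory Num.Theory.
Local Open Scope ring_scope.

Section Model.
Variables (R : realType) (nL nR : nat) (wL : 'I_nL -> R) (wR : 'I_nR -> R).

Definition MR (k : nat) : R := (\sum_(v < nR) wR v ^+ k) / nR%:R.
Definition ML (k : nat) : R := (\sum_(u < nL) wL u ^+ k) / nL%:R.

Definition edge_prob (u : 'I_nL) (v : 'I_nR) : R :=
  Num.min (wL u * wR v / (nR%:R * MR 1)) 1.

(* a realisation of the random bipartite graph = its set of edges *)
Definition bconfig := {ffun 'I_nL * 'I_nR -> bool}.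

Definition config_weight (g : bconfig) : R :=
  \prod_(e : 'I_nL * 'I_nR)
     (if g e then edge_prob e.1 e.2 else 1 - edge_prob e.1 e.2).

Definition Pr (A : pred bconfig) : R := \sum_(g | A g) config_weight g.

Definition proj_edge (g : bconfig) (u u' : 'I_nL) : bool :=
  (u != u') && [exists z : 'I_nR, g (u, z) && g (u', z)].

(* local clustering coefficient: Pr[(v,w) in E | (u,v),(u,w) in E] for a
   uniformly random (independent of the graph) pair of distinct v,w in L\{u}. *)
Definition clustering (u : 'I_nL) : R :=
  (\sum_(v : 'I_nL | v != u) \sum_(w : 'I_nL | (w != u) && (w != v))
      Pr [pred g | [&& proj_edge g u v, proj_edge g u w & proj_edge g v w]])
  / (\sum_(v : 'I_nL | v != u) \sum_(w : 'I_nL | (w != u) && (w != v))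
      Pr [pred g | proj_edge g u v && proj_edge g u w]).

End Model.

(* Main.v *)
Require Import Defs.
From HB Require Import structures.
From mathcomp Require Import all_boot all_order all_algebra.
From mathcomp Require Import all_classical all_reals all_analysis.
From mathcomp Require Import ring lra zify.
Set Implicit Arguments. Unset Strict Implicit. Unset Printing Implicit Defensive.
Import Order.TTheory GRing.Theory Num.Theory.
Local Open Scope ring_scope.

Definition rho (R : realType) nL nR (wL : 'I_nL -> R) (wR : 'I_nR -> R)
  (e : 'I_nL * 'I_nR) (b : bool) : R :=
  if b then edge_prob wL wR e.1 e.2 else 1 - edge_prob wL wR e.1 e.2.

Lemma PrE (R : realType) nL nR (wL : 'I_nL -> R) (wR : 'I_nR -> R) (A : pred (bconfig nL nR)) :
  Pr wL wR A = \sum_g (A g)%:R * config_weight wL wR g.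
Proof.
rewrite /Pr big_mkcond; apply: eq_bigr => g _; case: (A g); rewrite ?mul1r ?mul0r //.
Qed.

Lemma prod_ind (R : realType) (I : finType) (P : I -> bool) :
  \prod_i ((P i)%:R : R) = ([forall i, P i])%:R.
Proof.
case: (boolP [forall i, P i]) => [/forallP H|/forallP H].
  by rewrite big1 // => i _; rewrite H.
have [i Hi] : exists i, ~~ P i.
  by apply/existsP; rewrite -negb_forall; apply/forallP.
by rewrite (bigD1 i) //= (negbTE Hi) mul0r.
Qed.

Lemma PE (R : realType) nL nR (wL : 'I_nL -> R) (wR : 'I_nR -> R)
  (Q : 'I_nL * 'I_nR -> bool -> bool) :
  \sum_(g : bconfig nL nR) ([forall e, Q e (g e)])%:R * config_weight wL wR g
  = \prod_e \sum_b (Q e b)%:R * rho wL wR e b.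
Proof.
rewrite bigA_distr_bigA; apply: eq_bigr => g _.
by rewrite -prod_ind -big_split.
Qed.

Lemma prod3 (R : realType) n m (u v w : 'I_n) (A B C : 'I_m -> R) :
  u != v -> u != w -> v != w ->
  \prod_(x : 'I_n) \prod_(z : 'I_m)
     (if x == u then A z else if x == v then B z else if x == w then C z else 1)
  = \prod_z (A z * B z * C z).
Proof.
move=> uv uw vw.
have vu : (v == u) = false by rewrite eq_sym (negbTE uv).
have wu : (w == u) = false by rewrite eq_sym (negbTE uw).
have wv : (w == v) = false by rewrite eq_sym (negbTE vw).
rewrite (bigD1 u) //= (bigD1 v) //=; last by rewrite vu.
rewrite (bigD1 w) /=; last by rewrite wu wv.
rewrite [X in _ * (_ * (_ * X))]big1; last first.
  move=> x /andP [/andP [xu xv] xw]; apply: big1 => z _.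
  by rewrite (negbTE xu) (negbTE xv) (negbTE xw).
rewrite mulr1 eqxx vu wu wv eqxx eqxx !big_split /=.
by rewrite mulrA.
Qed.

Lemma PEfix (R : realType) nL nR (wL : 'I_nL -> R) (wR : 'I_nR -> R)
  (u v w : 'I_nL) (fu fv fw : 'I_nR -> bool) :
  u != v -> u != w -> v != w ->
  \sum_(g : bconfig nL nR)
     ([forall z, [&& g (u, z) == fu z, g (v, z) == fv z & g (w, z) == fw z]])%:R
       * config_weight wL wR g
  = \prod_z (rho wL wR (u, z) (fu z) * rho wL wR (v, z) (fv z) * rho wL wR (w, z) (fw z)).
Proof.
move=> uv uw vw.
have vu : (v == u) = false by rewrite eq_sym (negbTE uv).
have wu : (w == u) = false by rewrite eq_sym (negbTE uw).
have wv : (w == v) = false by rewrite eq_sym (negbTE vw).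
pose Q (e : 'I_nL * 'I_nR) (b : bool) :=
  if e.1 == u then b == fu e.2 else if e.1 == v then b == fv e.2
  else if e.1 == w then b == fw e.2 else true.
transitivity (\sum_(g : bconfig nL nR) ([forall e, Q e (g e)])%:R * config_weight wL wR g).
  apply: eq_bigr => g _; congr ((nat_of_bool _)%:R * _).
  apply/idP/idP => /forallP H; apply/forallP.
    move=> [x z]; rewrite /Q /=.
    case/and3P: (H z) => /eqP Hu /eqP Hv /eqP Hw.
    case: eqP => [->|_]; first by rewrite Hu.
    case: eqP => [->|_]; first by rewrite Hv.
    by case: eqP => [->|_]; first by rewrite Hw.
  move=> z; apply/and3P; split.
  - by have := H (u, z); rewrite /Q /= eqxx.
  - by have := H (v, z); rewrite /Q /= vu eqxx.
  - by have := H (w, z); rewrite /Q /= wu wv eqxx.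
rewrite PE.
pose h (x : 'I_nL) (z : 'I_nR) :=
  if x == u then rho wL wR (u, z) (fu z) else if x == v then rho wL wR (v, z) (fv z)
  else if x == w then rho wL wR (w, z) (fw z) else 1.
rewrite (eq_bigr (fun e => h e.1 e.2)); last first.
  move=> [x z] _; rewrite big_bool /Q /h /=.
  case: (x =P u) => [->|_]; first by case: (fu z); rewrite /= ?mul1r ?mul0r ?addr0 ?add0r.
  case: (x =P v) => [->|_]; first by case: (fv z); rewrite /= ?mul1r ?mul0r ?addr0 ?add0r.
  case: (x =P w) => [->|_]; first by case: (fw z); rewrite /= ?mul1r ?mul0r ?addr0 ?add0r.
  by rewrite /rho /= !mul1r addrC subrK.
by rewrite -(pair_bigA _ h) prod3.
Qed.

Lemma CL (R : realType) nL nR (wL : 'I_nL -> R) (wR : 'I_nR -> R)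
  (u v w : 'I_nL) (Q : 'I_nR -> bool -> bool -> bool -> bool) :
  u != v -> u != w -> v != w ->
  Pr wL wR [pred g : bconfig nL nR | [forall z, Q z (g (u, z)) (g (v, z)) (g (w, z))]]
  = \prod_z \sum_(t : bool * bool * bool)
       (Q z t.1.1 t.1.2 t.2)%:R *
       (rho wL wR (u, z) t.1.1 * rho wL wR (v, z) t.1.2 * rho wL wR (w, z) t.2).
Proof.
move=> uv uw vw.
rewrite PrE.
pose M (phi : {ffun 'I_nR -> bool * bool * bool}) (g : bconfig nL nR) :=
  [forall z, [&& g (u, z) == (phi z).1.1, g (v, z) == (phi z).1.2 & g (w, z) == (phi z).2]].
pose A (phi : {ffun 'I_nR -> bool * bool * bool}) :=
  [forall z, Q z (phi z).1.1 (phi z).1.2 (phi z).2].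
transitivity (\sum_g (\sum_phi (A phi)%:R * (M phi g)%:R) * config_weight wL wR g).
  apply: eq_bigr => g _; congr (_ * _).
  pose phi0 : {ffun 'I_nR -> bool * bool * bool} := [ffun z => (g (u, z), g (v, z), g (w, z))].
  rewrite (bigD1 phi0) //= big1 ?addr0.
    have -> : M phi0 g by apply/forallP => z; rewrite /phi0 ffunE /= !eqxx.
    rewrite mulr1; congr ((nat_of_bool _)%:R).
    by apply: eq_forallb => z; rewrite /phi0 ffunE.
  move=> phi Hphi; case: (boolP (M phi g)) => [/forallP HM|]; last by rewrite mulr0.
  exfalso; move/eqP: Hphi; apply; apply/ffunP => z; rewrite /phi0 ffunE.
  by move: (HM z); case: (phi z) => [[a b] c] /= /and3P [/eqP-> /eqP-> /eqP->].
rewrite (eq_bigr (fun g => \sum_phi (A phi)%:R * (M phi g)%:R * config_weight wL wR g)); last by move=> g _; rewrite mulr_suml.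
rewrite exchange_big /=.
transitivity (\sum_phi (A phi)%:R * \prod_z (rho wL wR (u, z) (phi z).1.1 *
          rho wL wR (v, z) (phi z).1.2 * rho wL wR (w, z) (phi z).2)).
  apply: eq_bigr => phi _.
  rewrite -(PEfix wL wR (fun z => (phi z).1.1) (fun z => (phi z).1.2) (fun z => (phi z).2)) //.
  rewrite mulr_sumr; apply: eq_bigr => g _; by rewrite mulrA.
rewrite bigA_distr_bigA; apply: eq_bigr => phi _.
by rewrite -prod_ind -big_split.
Qed.

Lemma sum3 (R : realType) (F : bool -> bool -> bool -> R) :
  \sum_(t : bool * bool * bool) F t.1.1 t.1.2 t.2
  = F true true true + F true true false + F true false true + F true false false
  + F false true true + F false true false + F false false true + F false false false.
Proof.
rewrite -(pair_bigA _ (fun p c => F p.1 p.2 c)) /=.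
rewrite -(pair_bigA _ (fun a b => \sum_c F a b c)) /=.
rewrite !big_bool /=; ring.
Qed.

Lemma ind_le1 (R : realType) (b : bool) : ((b : nat)%:R : R) <= 1.
Proof. by case: b. Qed.
Lemma ind_ge0 (R : realType) (b : bool) : 0 <= ((b : nat)%:R : R).
Proof. by case: b. Qed.

Lemma sum_lin4 (R : realType) (I : finType) (c : I -> R) (X f1 f2 f3 : I -> bool) :
  (forall i, (X i)%:R = 1 - (f1 i)%:R - (f2 i)%:R + (f3 i)%:R :> R) ->
  \sum_i (X i)%:R * c i = \sum_i c i - \sum_i (f1 i)%:R * c i - \sum_i (f2 i)%:R * c i
     + \sum_i (f3 i)%:R * c i.
Proof.
move=> H; rewrite -!sumrB -big_split /=; apply: eq_bigr => i _; rewrite H; ring.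
Qed.

Lemma le_sum1 (R : realType) (I : finType) (F : I -> R) i0 :
  (forall i, 0 <= F i) -> F i0 <= \sum_i F i.
Proof.
move=> H; rewrite (bigD1 i0) //=.
have : 0 <= \sum_(i | i != i0) F i by apply: sumr_ge0.
lra.
Qed.

Lemma ge_sum1 (R : realType) (I : finType) (F : I -> R) i0 c :
  (forall i, 0 <= F i) -> c <= F i0 -> c <= \sum_i F i.
Proof. move=> H1 H2; apply: le_trans H2 _; exact: le_sum1. Qed.

Lemma prod_if1 (R : realType) n (z0 : 'I_n) (A : 'I_n -> R) :
  \prod_(z < n) (if z == z0 then A z else 1) = A z0.
Proof.
rewrite (bigD1 z0) // eqxx big1 => [|z /negbTE -> //].
exact: mulr1.
Qed.

Lemma prod_if3 (R : realType) n (z1 z2 z3 : 'I_n) (A B C : 'I_n -> R) :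
  z1 != z2 -> z1 != z3 -> z2 != z3 ->
  \prod_(z < n) (if z == z1 then A z else if z == z2 then B z else if z == z3 then C z else 1) = A z1 * B z2 * C z3.
Proof.
move=> h12 h13 h23.
have e21 : (z2 == z1) = false by rewrite eq_sym (negbTE h12).
have e31 : (z3 == z1) = false by rewrite eq_sym (negbTE h13).
have e32 : (z3 == z2) = false by rewrite eq_sym (negbTE h23).
rewrite (bigD1 z1) // (bigD1 z2); last by rewrite /= e21.
rewrite (bigD1 z3); last by rewrite /= e31 e32.
rewrite big1; last by move=> z /andP [/andP [/negbTE -> /negbTE ->] /negbTE ->].
rewrite eqxx e21 eqxx e31 e32 eqxx /=.
by rewrite mulr1 mulrA.
Qed.

Definition Ecasc n (z1 z2 z3 z : 'I_n) (a b c : bool) :=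
  if z == z1 then a && b else if z == z2 then a && c else if z == z3 then b && c else true.

Lemma ind_aux (R : realType) (c : R) (b t : bool) : 0 <= c -> (~~ b -> t) -> c - b%:R * c <= t%:R * c.
Proof. by case: b; case: t => /= hc H; rewrite ?mul1r ?mul0r ?subrr ?subr0 //; have := H isT. Qed.

Section P.
Context (R : realType) (nL nR : nat) (wL : 'I_nL -> R) (wR : 'I_nR -> R).
Context (wLpos : forall i, 0 < wL i) (wRpos : forall j, 0 < wR j).
Context (u v w : 'I_nL) (uv : u != v) (uw : u != w) (vw : v != w).
Local Notation ep := (edge_prob wL wR).
Local Notation cw := (config_weight wL wR).

Definition loc (Q : bool -> bool -> bool -> bool) z :=
  \sum_(t : bool * bool * bool) (Q t.1.1 t.1.2 t.2)%:R *
       (rho wL wR (u, z) t.1.1 * rho wL wR (v, z) t.1.2 * rho wL wR (w, z) t.2).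

Lemma locE Q z : loc Q z =
  let p := ep u z in let q := ep v z in let r := ep w z in
    (Q true true true)%:R * (p * q * r) + (Q true true false)%:R * (p * q * (1 - r))
  + (Q true false true)%:R * (p * (1 - q) * r) + (Q true false false)%:R * (p * (1 - q) * (1 - r))
  + (Q false true true)%:R * ((1 - p) * q * r) + (Q false true false)%:R * ((1 - p) * q * (1 - r))
  + (Q false false true)%:R * ((1 - p) * (1 - q) * r)
  + (Q false false false)%:R * ((1 - p) * (1 - q) * (1 - r)).
Proof.
by rewrite /loc (sum3 (fun a b c => (Q a b c)%:R * (rho wL wR (u, z) a * rho wL wR (v, z) b * rho wL wR (w, z) c))).
Qed.

Lemma PrCL (Q : 'I_nR -> bool -> bool -> bool -> bool) :
  \sum_(g : bconfig nL nR) ([forall z, Q z (g (u, z)) (g (v, z)) (g (w, z))])%:R * cw g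
  = \prod_z loc (Q z) z.
Proof. by rewrite -CL // PrE. Qed.

Lemma MR1_pos (z : 'I_nR) : 0 < MR wR 1.
Proof.
have nRpos : (0 < nR)%N by apply: leq_ltn_trans (leq0n z) (ltn_ord z).
rewrite /MR divr_gt0 ?ltr0n //.
rewrite (bigD1 z) //=.
have h1 : 0 <= \sum_(i < nR | i != z) wR i ^+ 1 by apply: sumr_ge0 => i _; rewrite expr1; exact: ltW.
have h2 := wRpos z; rewrite expr1; lra.
Qed.

Lemma ep_ge0 x z : 0 <= ep x z.
Proof.
rewrite /edge_prob le_min ler01 andbT.
have nRpos : (0 < nR)%N by apply: leq_ltn_trans (leq0n z) (ltn_ord z).
apply: divr_ge0; apply: mulr_ge0.
- exact: ltW (wLpos _).
- exact: ltW (wRpos _).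
- by rewrite ler0n.
- exact: ltW (MR1_pos z).
Qed.

Lemma ep_le1 x z : ep x z <= 1.
Proof. by rewrite /edge_prob ge_min lexx orbT. Qed.

Lemma cw_ge0 g : 0 <= cw g.
Proof.
apply: prodr_ge0 => e _; case: (g e); have := ep_ge0 e.1 e.2; have := ep_le1 e.1 e.2; lra.
Qed.

Lemma Pr1 : \sum_(g : bconfig nL nR) cw g = 1.
Proof.
have := PrCL (fun _ _ _ _ => true).
rewrite (eq_bigr (fun g => cw g)); last first.
  by move=> g _; rewrite (_ : [forall z, true] = true) ?mul1r //; apply/forallP.
move=> ->; apply: big1 => z _; rewrite locE /=; ring.
Qed.


Lemma forall_andb (I : finType) (P Q : pred I) :
  [forall i, P i && Q i] = [forall i, P i] && [forall i, Q i].
Proof.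
apply/forallP/andP => [H|[/forallP H1 /forallP H2] i]; last by rewrite H1 H2.
by split; apply/forallP => i; case/andP: (H i).
Qed.

Lemma W_eq : Pr wL wR [pred g : bconfig nL nR | proj_edge g u v && proj_edge g u w]
  = 1 - \prod_z (1 - ep u z * ep v z) - \prod_z (1 - ep u z * ep w z)
    + \prod_z (1 - ep u z * ep v z - ep u z * ep w z + ep u z * ep v z * ep w z).
Proof.
rewrite PrE (sum_lin4 _ (f1 := fun g : bconfig nL nR => [forall z, ~~ (g (u, z) && g (v, z))])
   (f2 := fun g : bconfig nL nR => [forall z, ~~ (g (u, z) && g (w, z))])
   (f3 := fun g : bconfig nL nR => [forall z, ~~ (g (u, z) && g (v, z)) && ~~ (g (u, z) && g (w, z))])).
  rewrite Pr1.
  have := PrCL (fun _ a b c => ~~ (a && b)); rewrite /= => ->.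
  have := PrCL (fun _ a b c => ~~ (a && c)); rewrite /= => ->.
  have := PrCL (fun _ a b c => ~~ (a && b) && ~~ (a && c)); rewrite /= => ->.
  congr (_ - _ - _ + _); apply: eq_bigr => z _; rewrite locE /=; ring.
move=> g; rewrite /= /proj_edge uv uw /= forall_andb -!negb_exists.
by case: [exists x, g (u, x) && g (v, x)]; case: [exists x, g (u, x) && g (w, x)]; rewrite /=; ring.
Qed.


Lemma T_point (g : bconfig nL nR) :
  ([&& proj_edge g u v, proj_edge g u w & proj_edge g v w])%:R <=
  \sum_z0 ([forall z, (z == z0) ==> [&& g (u, z), g (v, z) & g (w, z)]])%:R
  + \sum_z1 \sum_z2 \sum_z3 ([&& z1 != z2, z1 != z3 & z2 != z3])%:R *
      ([forall z, Ecasc z1 z2 z3 z (g (u, z)) (g (v, z)) (g (w, z))])%:R :> R.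
Proof.
have S1 : 0 <= \sum_z0 ([forall z, (z == z0) ==> [&& g (u, z), g (v, z) & g (w, z)]])%:R :> R.
  by apply: sumr_ge0 => i _; apply: ind_ge0.
have S2 : 0 <= \sum_z1 \sum_z2 \sum_z3 ([&& z1 != z2, z1 != z3 & z2 != z3])%:R *
      ([forall z, Ecasc z1 z2 z3 z (g (u, z)) (g (v, z)) (g (w, z))])%:R :> R.
  by do 3! (apply: sumr_ge0 => ? _); apply: mulr_ge0; apply: ind_ge0.
case: (boolP [&& _, _ & _]) => [|_]; last by apply: addr_ge0.
rewrite /proj_edge uv uw vw /= => /and3P [/existsP [z1 /andP [h1u h1v]]
   /existsP [z2 /andP [h2u h2w]] /existsP [z3 /andP [h3v h3w]]].
have Sfull : forall z0, [&& g (u, z0), g (v, z0) & g (w, z0)] ->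
   1 <= \sum_z0 ([forall z, (z == z0) ==> [&& g (u, z), g (v, z) & g (w, z)]])%:R :> R.
  move=> z0 H; apply: (@ge_sum1 R _ (fun z4 : 'I_nR => ([forall z, (z == z4) ==> [&& g (u, z), g (v, z) & g (w, z)]])%:R) z0); first by move=> i; apply: ind_ge0.
  rewrite (_ : [forall z, _] = true) //; apply/forallP => z; apply/implyP => /eqP -> //.
case: (boolP (g (w, z1))) => [h1w|h1w].
  have := Sfull z1; rewrite h1u h1v h1w => /(_ isT); lra.
case: (boolP (g (v, z2))) => [h2v|h2v].
  have := Sfull z2; rewrite h2u h2v h2w => /(_ isT); lra.
case: (boolP (g (u, z3))) => [h3u|h3u].
  have := Sfull z3; rewrite h3u h3v h3w => /(_ isT); lra.
have d12 : z1 != z2 by apply/eqP => e; move: h1w; rewrite e h2w.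
have d13 : z1 != z3 by apply/eqP => e; move: h1w; rewrite e h3w.
have d23 : z2 != z3 by apply/eqP => e; move: h2v; rewrite e h3v.
suff : 1 <= \sum_z1 \sum_z2 \sum_z3 ([&& z1 != z2, z1 != z3 & z2 != z3])%:R *
      ([forall z, Ecasc z1 z2 z3 z (g (u, z)) (g (v, z)) (g (w, z))])%:R :> R by lra.
apply: (@ge_sum1 R _ (fun a => \sum_b \sum_c ([&& a != b, a != c & b != c])%:R * ([forall z, Ecasc a b c z (g (u, z)) (g (v, z)) (g (w, z))])%:R) z1).
  by move=> i; do 2! (apply: sumr_ge0 => ? _); apply: mulr_ge0; apply: ind_ge0.
apply: (@ge_sum1 R _ (fun b => \sum_c ([&& z1 != b, z1 != c & b != c])%:R * ([forall z, Ecasc z1 b c z (g (u, z)) (g (v, z)) (g (w, z))])%:R) z2).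
  by move=> i; do 1! (apply: sumr_ge0 => ? _); apply: mulr_ge0; apply: ind_ge0.
apply: (@ge_sum1 R _ (fun c => ([&& z1 != z2, z1 != c & z2 != c])%:R * ([forall z, Ecasc z1 z2 c z (g (u, z)) (g (v, z)) (g (w, z))])%:R) z3).
  by move=> i; apply: mulr_ge0; apply: ind_ge0.
rewrite d12 d13 d23 /= mul1r (_ : [forall z, _] = true) //.
apply/forallP => z; rewrite /Ecasc.
case: (z =P z1) => [->|_]; first by rewrite h1u h1v.
case: (z =P z2) => [->|_]; first by rewrite h2u h2w.
by case: (z =P z3) => [->|_]; first by rewrite h3v h3w.
Qed.

Lemma loc_casc z1 z2 z3 z : loc (Ecasc z1 z2 z3 z) z =
  if z == z1 then ep u z * ep v z else if z == z2 then ep u z * ep w z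
  else if z == z3 then ep v z * ep w z else 1.
Proof.
rewrite locE /Ecasc.
case: (z == z1) => /=; first ring.
case: (z == z2) => /=; first ring.
case: (z == z3) => /=; ring.
Qed.

Lemma loc_full z0 z : loc (fun a b c => (z == z0) ==> [&& a, b & c]) z =
  if z == z0 then ep u z * ep v z * ep w z else 1.
Proof. rewrite locE; case: (z == z0) => /=; ring. Qed.

Lemma T_le : Pr wL wR [pred g : bconfig nL nR | [&& proj_edge g u v, proj_edge g u w & proj_edge g v w]]
  <= \sum_z ep u z * ep v z * ep w z
     + (\sum_z ep u z * ep v z) * (\sum_z ep u z * ep w z) * (\sum_z ep v z * ep w z).
Proof.
rewrite PrE.
apply: le_trans.
  apply: ler_sum => g _; apply: ler_wpM2r; first exact: cw_ge0.
  exact: T_point.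
rewrite (eq_bigr (fun g : bconfig nL nR => \sum_z0 ([forall z, (z == z0) ==> [&& g (u, z), g (v, z) & g (w, z)]])%:R * cw g
   + \sum_z1 \sum_z2 \sum_z3 ([&& z1 != z2, z1 != z3 & z2 != z3])%:R *
      (([forall z, Ecasc z1 z2 z3 z (g (u, z)) (g (v, z)) (g (w, z))])%:R * cw g))); last first.
  move=> g _; rewrite mulrDl !mulr_suml; congr (_ + _).
  apply: eq_bigr => z1 _; rewrite mulr_suml; apply: eq_bigr => z2 _.
  rewrite mulr_suml; apply: eq_bigr => z3 _; by rewrite mulrA.
rewrite big_split /=; apply: lerD.
  rewrite exchange_big /=; apply: ler_sum => z0 _.
  have := PrCL (fun z a b c => (z == z0) ==> [&& a, b & c]); rewrite /= => ->.
  by rewrite (eq_bigr _ (fun z _ => loc_full z0 z)) (prod_if1 z0 (fun z => ep u z * ep v z * ep w z)).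
rewrite exchange_big /=.
under eq_bigr do rewrite exchange_big /=.
under eq_bigr do under eq_bigr do rewrite exchange_big /=.
rewrite -mulrA mulr_suml; apply: ler_sum => z1 _.
rewrite mulr_suml mulr_sumr; apply: ler_sum => z2 _.
rewrite mulr_sumr mulr_sumr; apply: ler_sum => z3 _.
rewrite -mulr_sumr.
have := PrCL (fun z a b c => Ecasc z1 z2 z3 z a b c); rewrite /= => ->.
rewrite (eq_bigr _ (fun z _ => loc_casc z1 z2 z3 z)).
case: (boolP [&& z1 != z2, z1 != z3 & z2 != z3]) => [/and3P [d12 d13 d23]|_].
  by rewrite (prod_if3 (fun z => ep u z * ep v z) (fun z => ep u z * ep w z) (fun z => ep v z * ep w z)) // mul1r !mulrA; apply: le_refl.
rewrite mul0r; repeat apply: mulr_ge0; apply: ep_ge0.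

Qed.

Lemma T_ge : 1 - \prod_z (1 - ep u z * ep v z * ep w z) <=
  Pr wL wR [pred g : bconfig nL nR | [&& proj_edge g u v, proj_edge g u w & proj_edge g v w]].
Proof.
have := PrCL (fun z a b c => ~~ [&& a, b & c]); rewrite /= => H.
have -> : \prod_z (1 - ep u z * ep v z * ep w z) = \prod_z loc (fun a b c => ~~ [&& a, b & c]) z.
  by apply: eq_bigr => z _; rewrite locE /=; ring.
rewrite -{1}Pr1 -H PrE -sumrB; apply: ler_sum => g _.
apply: ind_aux; first exact: cw_ge0.
rewrite negb_forall => /existsP [z]; rewrite negbK => /and3P [hu hv hw].
rewrite /= /proj_edge uv uw vw /=.
by apply/and3P; split; apply/existsP; exists z; apply/andP; split.
Qed.

End P.

Section An.
Context (R : realType) (I : Type).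

Lemma Pbnd (r : seq I) (y : I -> R) : (forall i, 0 <= y i <= 1) ->
  0 <= \prod_(i <- r) (1 - y i) <= 1.
Proof.
move=> H; elim: r => [|i r IH]; rewrite ?big_nil ?big_cons; first lra.
have := H i; nra.
Qed.

Lemma Sge0 (r : seq I) (y : I -> R) : (forall i, 0 <= y i) -> 0 <= \sum_(i <- r) y i.
Proof. by move=> H; apply: sumr_ge0. Qed.

Lemma L1 (r : seq I) (y : I -> R) : (forall i, 0 <= y i <= 1) ->
  1 - \prod_(i <- r) (1 - y i) <= \sum_(i <- r) y i.
Proof.
move=> H; elim: r => [|i r IH]; rewrite ?big_nil ?big_cons; first lra.
have := H i; have := Pbnd r H; nra.
Qed.

Lemma L3 (r : seq I) (y : I -> R) : (forall i, 0 <= y i <= 1) ->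
  1 - \sum_(i <- r) y i <= \prod_(i <- r) (1 - y i).
Proof. move=> H; have := L1 r H; lra. Qed.

Lemma L2 (r : seq I) (y : I -> R) : (forall i, 0 <= y i <= 1) ->
  \sum_(i <- r) y i - (\sum_(i <- r) y i) ^+ 2 <= 1 - \prod_(i <- r) (1 - y i).
Proof.
move=> H; elim: r => [|i r IH]; rewrite ?big_nil ?big_cons; first lra.
have := H i; have := Pbnd r H; have := L1 r H.
have : 0 <= \sum_(j <- r) y j by apply: sumr_ge0 => j; case/andP: (H j).
set S := \sum_(j <- r) y j; set P := \prod_(j <- r) (1 - y j); move: IH; rewrite -/S -/P.
move=> IH hS hL1 hP hy; nra.
Qed.

Lemma L4a (r : seq I) (m d : I -> R) : (forall i, [/\ 0 <= m i, 0 <= d i & m i + d i <= 1]) ->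
  \prod_(i <- r) (m i + d i) - \prod_(i <- r) m i <= \sum_(i <- r) d i.
Proof.
move=> H; elim: r => [|i r IH]; rewrite ?big_nil ?big_cons; first lra.
have B1 : 0 <= \prod_(j <- r) m j <= \prod_(j <- r) (m j + d j).
  apply/andP; split; first by apply: prodr_ge0 => j _; case: (H j).
  by apply: ler_prod => j _; case: (H j) => ? ? ?; apply/andP; split => //; lra.
have B2 : \prod_(j <- r) (m j + d j) <= 1.
  by apply: prodr_ile1 => j _; case: (H j) => ? ? ?; apply/andP; split; lra.
case: (H i) => ? ? ?; nra.
Qed.

Lemma L4b (r : seq I) (m d : I -> R) : (forall i, [/\ 0 <= m i, 0 <= d i & m i + d i <= 1]) ->
  (\sum_(i <- r) d i) * \prod_(i <- r) m i <= \prod_(i <- r) (m i + d i) - \prod_(i <- r) m i.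
Proof.
move=> H; elim: r => [|i r IH]; rewrite ?big_nil ?big_cons; first lra.
have B1 : 0 <= \prod_(j <- r) m j by apply: prodr_ge0 => j _; case: (H j).
have B3 : \prod_(j <- r) m j <= 1.
  by apply: prodr_ile1 => j _; case: (H j) => ? ? ?; apply/andP; split; lra.
have B4 : 0 <= \sum_(j <- r) d j by apply: sumr_ge0 => j _; case: (H j).
case: (H i) => h1 h2 h3.
move: IH; set S := \sum_(j <- r) d j; set Q := \prod_(j <- r) m j; set T := \prod_(j <- r) (m j + d j) => IH.
have K1 : 0 <= m i * (T - Q - S * Q) by apply: mulr_ge0 => //; lra.
have K0 : m i * Q <= Q by rewrite ler_piMl //; lra.
have K5 : 0 <= S * Q by apply: mulr_ge0.
have K2 : 0 <= d i * (T - m i * Q) by apply: mulr_ge0 => //; lra.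
nra.
Qed.

End An.

Section P2.
Context (R : realType) (nL nR : nat) (wL : 'I_nL -> R) (wR : 'I_nR -> R).
Context (wLpos : forall i, 0 < wL i) (wRpos : forall j, 0 < wR j).
Context (u v w : 'I_nL) (uv : u != v) (uw : u != w) (vw : v != w).
Local Notation ep := (edge_prob wL wR).
Let a := \sum_z ep u z * ep v z.
Let b := \sum_z ep u z * ep w z.
Let c := \sum_z ep v z * ep w z.
Let s := \sum_z ep u z * ep v z * ep w z.
Context (k : R) (k0 : 0 <= k) (k4 : k <= 1/4).

Let ep01 x z : 0 <= ep x z <= 1.
Proof. by rewrite ep_ge0 ?ep_le1. Qed.

Let pq01 x y z : 0 <= ep x z * ep y z <= 1.
Proof. have := ep01 x z; have := ep01 y z; nra. Qed.

Let ppp01 z : 0 <= ep u z * ep v z * ep w z <= 1.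
Proof.
have := pq01 u v z; have := ep01 w z; move=> /andP [h1 h2] /andP [h3 h4].
apply/andP; split; first exact: mulr_ge0.
by apply: mulr_ile1.
Qed.

Let s_ge0 : 0 <= s.
Proof. by apply: sumr_ge0 => z _; repeat apply: mulr_ge0; apply: ep_ge0. Qed.
Let a_ge0 : 0 <= a. Proof. by apply: sumr_ge0 => z _; case/andP: (pq01 u v z). Qed.
Let b_ge0 : 0 <= b. Proof. by apply: sumr_ge0 => z _; case/andP: (pq01 u w z). Qed.



Lemma T_bounds : s <= k -> c <= k ->
  s * (1 - k) <= Pr wL wR [pred g : bconfig nL nR | [&& proj_edge g u v, proj_edge g u w & proj_edge g v w]]
  <= s + k * (a * b).
Proof.
move=> hs hc; apply/andP; split.
  apply: le_trans (T_ge wLpos wRpos uv uw vw).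
  have := L2 (index_enum 'I_nR) (y := fun z => ep u z * ep v z * ep w z).
  rewrite -/s => /(_ _) H.
  have : s - s ^+ 2 <= 1 - \prod_z (1 - ep u z * ep v z * ep w z).
    by apply: H => z; apply: ppp01.
  have : 0 <= s * (k - s) by apply: mulr_ge0 => //; lra.
  nra.
apply: le_trans (T_le wLpos wRpos uv uw vw) _.
rewrite -/a -/b -/c -/s.
have : 0 <= a * b by apply: mulr_ge0.
have : c * (a * b) <= k * (a * b) by apply: ler_wpM2r => //; apply: mulr_ge0.
have := s_ge0. nra.
Qed.

Lemma W_bounds : a <= k -> b <= k -> (forall z, ep u z <= k) ->
  (a * b + s) * (1 - 3 * k) <= Pr wL wR [pred g : bconfig nL nR | proj_edge g u v && proj_edge g u w]
  <= a * b + s.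
Proof.
move=> ha hb hp.
have tt1 : 0 <= 1 - a by move: k4; lra.
have tt2 : 0 <= 1 - b by move: k4; lra.
have tt3 : 0 <= 1 - a - b by move: k4; lra.
have k1 : 0 <= 1 - 3 * k by move: k4; lra.
rewrite W_eq //.
pose m z := (1 - ep u z * ep v z) * (1 - ep u z * ep w z).
pose d z := ep u z * ep v z * ep w z * (1 - ep u z).
have eqm : \prod_z (1 - ep u z * ep v z - ep u z * ep w z + ep u z * ep v z * ep w z)
   = \prod_z (m z + d z) by apply: eq_bigr => z _; rewrite /m /d; ring.
have Pm : \prod_z m z = \prod_z (1 - ep u z * ep v z) * \prod_z (1 - ep u z * ep w z).
  by rewrite -big_split.
rewrite eqm.
set PA := \prod_z (1 - ep u z * ep v z).
set PB := \prod_z (1 - ep u z * ep w z).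
have hmd : forall z, [/\ 0 <= m z, 0 <= d z & m z + d z <= 1].
  move=> z; have := ep01 u z; have := ep01 v z; have := ep01 w z; have := pq01 u v z; have := pq01 u w z.
  have := ppp01 z.
  rewrite /m /d => H1 H2 H3 H4 H5 H6; split.
  - by apply: mulr_ge0; lra.
  - by apply: mulr_ge0; lra.
  - have -> : (1 - ep u z * ep v z) * (1 - ep u z * ep w z) + ep u z * ep v z * ep w z * (1 - ep u z)
       = 1 - ep u z * ep v z - ep u z * ep w z + ep u z * ep v z * ep w z by ring.
    have : ep u z * ep v z * ep w z <= ep u z * ep w z.
      have -> : ep u z * ep v z * ep w z = (ep u z * ep w z) * ep v z by ring.
      by apply: ler_piMr; lra.
    lra.
have D1 := L4a (index_enum 'I_nR) hmd.
have D2 := L4b (index_enum 'I_nR) hmd.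
rewrite Pm -/PA -/PB in D1 D2.
set Pmd := \prod_(i <- index_enum 'I_nR) (m i + d i) in D1 D2 *.
have Sd1 : \sum_z d z <= s.
  apply: ler_sum => z _; rewrite /d; have := ppp01 z; have := ep01 u z.
  move=> /andP [? ?] /andP [? ?]; rewrite ler_piMr //; lra.
have Sd2 : s * (1 - k) <= \sum_z d z.
  rewrite /s mulr_suml; apply: ler_sum => z _; rewrite /d; have := ppp01 z; have := hp z.
  move=> ? /andP [? ?]; apply: ler_wpM2l => //; lra.
have A1 : 1 - PA <= a by apply: L1 => z; apply: pq01.
have A2 : a - a ^+ 2 <= 1 - PA by apply: L2 => z; apply: pq01.
have A0 : 0 <= PA <= 1 by apply: Pbnd => z; apply: pq01.
have B1 : 1 - PB <= b by apply: L1 => z; apply: pq01.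
have B2 : b - b ^+ 2 <= 1 - PB by apply: L2 => z; apply: pq01.
have B0 : 0 <= PB <= 1 by apply: Pbnd => z; apply: pq01.
have Mb : 1 - a - b <= PA * PB.
  rewrite -Pm.
  have -> : \prod_z m z = \prod_z (1 - (ep u z * ep v z + ep u z * ep w z - ep u z * ep v z * (ep u z * ep w z))).
    by apply: eq_bigr => z _; rewrite /m; ring.
  apply: le_trans (L3 _ _); last first.
    move=> z; have := pq01 u v z; have := pq01 u w z; nra.
  have : \sum_z (ep u z * ep v z + ep u z * ep w z - ep u z * ep v z * (ep u z * ep w z)) <= a + b.
    rewrite /a /b -big_split; apply: ler_sum => z _.
    have := pq01 u v z; have := pq01 u w z => /andP [? ?] /andP [? ?].
    have : 0 <= ep u z * ep v z * (ep u z * ep w z) by apply: mulr_ge0.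
    rewrite /=; lra.
  lra.
case/andP: A0 => A0a A0b; case/andP: B0 => B0a B0b.
have s0 := s_ge0.
have a0 := a_ge0.
have b0 := b_ge0.
have a2 : 0 <= a - a ^+ 2.
  have : 0 <= a * (1 - a) by apply: mulr_ge0.
  rewrite expr2; lra.
have b2 : 0 <= b - b ^+ 2.
  have : 0 <= b * (1 - b) by apply: mulr_ge0.
  rewrite expr2; lra.
apply/andP; split.
  have E1 : (a - a ^+ 2) * (b - b ^+ 2) <= (1 - PA) * (1 - PB).
    by apply: ler_pM.
  have E2 : s * (1 - k) * (1 - a - b) <= (\sum_z d z) * (PA * PB).
    apply: ler_pM => //; try lra.
    by apply: mulr_ge0; lra.
  have E3 : (a * b) * (1 - 3 * k) <= (a - a ^+ 2) * (b - b ^+ 2).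
    have -> : (a - a ^+ 2) * (b - b ^+ 2) = (a * b) * ((1 - a) * (1 - b)) by ring.
    apply: ler_wpM2l; first exact: mulr_ge0.
    nra.
  have E4 : s * (1 - 3 * k) <= s * (1 - k) * (1 - a - b).
    rewrite -mulrA; apply: ler_wpM2l => //; nra.
  nra.
have E1 : (1 - PA) * (1 - PB) <= a * b by apply: ler_pM; lra.
nra.
Qed.

End P2.

Lemma exists_pair n (u : 'I_n) : (3 <= n)%N -> exists v w : 'I_n, [&& v != u, w != u & w != v].
Proof.
move=> h3.
have h0 : (0 < n)%N by apply: leq_trans h3.
have h1 : (1 < n)%N by apply: leq_trans h3.
have h2 : (2 < n)%N by [].
pose o0 := Ordinal h0; pose o1 := Ordinal h1; pose o2 := Ordinal h2.
have d01 : o0 != o1 by []. have d02 : o0 != o2 by []. have d12 : o1 != o2 by [].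
have [v hv] : exists v, v != u.
  case: (eqVneq o0 u) => [e|ne]; last by exists o0.
  by exists o1; rewrite -e eq_sym.
case: (boolP ((o0 != u) && (o0 != v))) => [H|]; first by exists v, o0; rewrite hv.
case: (boolP ((o1 != u) && (o1 != v))) => [H|]; first by exists v, o1; rewrite hv.
case: (boolP ((o2 != u) && (o2 != v))) => [H|]; first by exists v, o2; rewrite hv.
rewrite !negb_and !negbK.
move=> /orP [/eqP e2|/eqP e2] /orP [/eqP e1|/eqP e1] /orP [/eqP e0|/eqP e0];
  subst; rewrite ?eqxx in d01 d02 d12 hv => //.
Qed.

Lemma ge_sum1P (R : realType) (I : finType) (P : pred I) (F : I -> R) i0 c :
  (forall i, P i -> 0 <= F i) -> P i0 -> c <= F i0 -> c <= \sum_(i | P i) F i.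
Proof.
move=> H Pi H2; rewrite (bigD1 i0) //=.
have : 0 <= \sum_(i | P i && (i != i0)) F i by apply: sumr_ge0 => i /andP [? ?]; apply: H.
lra.
Qed.

Section Inst.
Context (R : realType) (nL nR : nat) (wL : 'I_nL -> R) (wR : 'I_nR -> R).
Context (wLpos : forall i, 0 < wL i) (wRpos : forall j, 0 < wR j).
Context (nR0 : (0 < nR)%N).
Context (A1 : forall i j, wL i * wR j / (nR%:R * MR wR 1) <= 1).
Context (k : R) (k0 : 0 <= k) (k4 : k <= 1/4).
Context (Bnd : forall x y, wL x * wL y * MR wR 2 / (nR%:R * MR wR 1 ^+ 2) <= k ^+ 2).
Local Notation ep := (edge_prob wL wR).

Let z0 : 'I_nR := Ordinal nR0.
Let M1pos : 0 < MR wR 1 := MR1_pos wRpos z0.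
Let nRpos : 0 < nR%:R :> R. Proof. by rewrite ltr0n. Qed.

Lemma MRpos j : 0 < MR wR j.
Proof.
rewrite /MR divr_gt0 //.
rewrite (bigD1 z0) //=.
have h1 : 0 <= \sum_(i < nR | i != z0) wR i ^+ j.
  by apply: sumr_ge0 => i _; apply: exprn_ge0; exact: ltW.
have h2 : 0 < wR z0 ^+ j by apply: exprn_gt0.
lra.
Qed.

Lemma epE x z : ep x z = wL x * wR z / (nR%:R * MR wR 1).
Proof. by rewrite /edge_prob min_l. Qed.

Lemma sumpow j : \sum_z wR z ^+ j = nR%:R * MR wR j.
Proof. by rewrite /MR mulrC divfK // gt_eqF. Qed.

Lemma a_eq x y : \sum_z ep x z * ep y z = wL x * wL y * MR wR 2 / (nR%:R * MR wR 1 ^+ 2).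
Proof.
have K0 : nR%:R * MR wR 1 != 0 by rewrite mulf_neq0 // gt_eqF.
transitivity (wL x * wL y / (nR%:R * MR wR 1) ^+ 2 * \sum_z wR z ^+ 2).
  rewrite mulr_sumr; apply: eq_bigr => z _; rewrite !epE; field; rewrite !gt_eqF //.
rewrite sumpow; field; apply/andP; split; rewrite gt_eqF //.
Qed.

Lemma s_eq x y y' : \sum_z ep x z * ep y z * ep y' z =
   wL x * wL y * wL y' * MR wR 3 / (nR%:R ^+ 2 * MR wR 1 ^+ 3).
Proof.
have K0 : nR%:R * MR wR 1 != 0 by rewrite mulf_neq0 // gt_eqF.
transitivity (wL x * wL y * wL y' / (nR%:R * MR wR 1) ^+ 3 * \sum_z wR z ^+ 3).
  rewrite mulr_sumr; apply: eq_bigr => z _; rewrite !epE; field; rewrite !gt_eqF //.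
rewrite sumpow; field; apply/andP; split; rewrite gt_eqF //.
Qed.

Lemma k2k : k ^+ 2 <= k.
Proof. have := k4; have := k0; rewrite expr2; nra. Qed.

Lemma ab_eq u v w : (\sum_z ep u z * ep v z) * (\sum_z ep u z * ep w z) =
  (MR wR 2 ^+ 2 / (MR wR 3 * MR wR 1) * wL u) * \sum_z ep u z * ep v z * ep w z.
Proof.
rewrite !a_eq s_eq; field.
by rewrite !gt_eqF ?MRpos.
Qed.

Lemma p_le u z : ep u z <= k.
Proof.
have hp : 0 <= ep u z := ep_ge0 wLpos wRpos u z.
have h2 : ep u z ^+ 2 <= k ^+ 2.
  apply: le_trans (Bnd u u).
  have -> : wL u * wL u * MR wR 2 / (nR%:R * MR wR 1 ^+ 2)
     = (wL u / (nR%:R * MR wR 1)) ^+ 2 * \sum_z wR z ^+ 2.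
    by rewrite sumpow; field; rewrite !gt_eqF.
  rewrite epE (_ : wL u * wR z / (nR%:R * MR wR 1) = (wL u / (nR%:R * MR wR 1)) * wR z); last first.
    by rewrite mulrAC.
  rewrite exprMn; apply: ler_wpM2l; first exact: sqr_ge0.
  apply: (@le_sum1 _ _ (fun i => wR i ^+ 2) z) => i; exact: sqr_ge0.
have := k0; move: h2; rewrite !expr2; nra.
Qed.

Lemma pair_bounds u v w : u != v -> u != w -> v != w ->
  let s := \sum_z ep u z * ep v z * ep w z in
  let lam := MR wR 2 ^+ 2 / (MR wR 3 * MR wR 1) * wL u in
  [/\ Pr wL wR [pred g : bconfig nL nR | [&& proj_edge g u v, proj_edge g u w & proj_edge g v w]]
        <= (1 + k * lam) * s,
      (1 - k) * s <= Pr wL wR [pred g : bconfig nL nR | [&& proj_edge g u v, proj_edge g u w & proj_edge g v w]],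
      (1 + lam) * (1 - 3 * k) * s <= Pr wL wR [pred g : bconfig nL nR | proj_edge g u v && proj_edge g u w]
    & Pr wL wR [pred g : bconfig nL nR | proj_edge g u v && proj_edge g u w] <= (1 + lam) * s].
Proof.
move=> uv uw vw s lam.
have kk := k2k.
have ha : \sum_z ep u z * ep v z <= k by rewrite a_eq; apply: le_trans (Bnd u v) kk.
have hb : \sum_z ep u z * ep w z <= k by rewrite a_eq; apply: le_trans (Bnd u w) kk.
have hc : \sum_z ep v z * ep w z <= k by rewrite a_eq; apply: le_trans (Bnd v w) kk.
have hs : s <= k.
  apply: le_trans ha; apply: ler_sum => z _.
  apply: ler_piMr; last exact: ep_le1.
  by apply: mulr_ge0; apply: ep_ge0.
have eab := ab_eq u v w; rewrite -/s -/lam in eab.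
have [T1 T2] := andP (T_bounds wLpos wRpos uv uw vw hs hc).
have [W1 W2] := andP (W_bounds wLpos wRpos uv uw vw k4 ha hb (p_le u)).
rewrite -/s eab in T1 T2 W1 W2.
split.
- by rewrite (_ : (1 + k * lam) * s = s + k * (lam * s)) //; ring.
- by rewrite mulrC.
- by rewrite (_ : (1 + lam) * (1 - 3 * k) * s = (lam * s + s) * (1 - 3 * k)) //; ring.
- by rewrite (_ : (1 + lam) * s = lam * s + s) //; ring.
Qed.

Lemma inst (nL3 : (3 <= nL)%N) u :
  `| clustering wL wR u - 1 / (1 + MR wR 2 ^+ 2 / (MR wR 3 * MR wR 1) * wL u) | <= 16 * k.
Proof.
set lam := MR wR 2 ^+ 2 / (MR wR 3 * MR wR 1) * wL u.
have lam0 : 0 <= lam.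
  rewrite /lam; apply: mulr_ge0; last exact: ltW.
  apply: divr_ge0; first by apply: exprn_ge0; apply: ltW; apply: MRpos.
  by apply: mulr_ge0; apply: ltW; apply: MRpos.
rewrite /clustering.
set X := \sum_(v | v != u) _.
set Y := \sum_(v | v != u) _.
pose S := \sum_(v | v != u) \sum_(w | (w != u) && (w != v)) \sum_z ep u z * ep v z * ep w z.
have sge0 : forall v w, 0 <= \sum_z ep u z * ep v z * ep w z.
  by move=> v w; apply: sumr_ge0 => z _; repeat apply: mulr_ge0; apply: ep_ge0.
have HX1 : X <= (1 + k * lam) * S.
  rewrite /X /S mulr_sumr; apply: ler_sum => v hv; rewrite mulr_sumr; apply: ler_sum => w /andP [hwu hwv].
  have [] := pair_bounds (u := u) (v := v) (w := w); by rewrite 1?eq_sym.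
have HX2 : (1 - k) * S <= X.
  rewrite /X /S mulr_sumr; apply: ler_sum => v hv; rewrite mulr_sumr; apply: ler_sum => w /andP [hwu hwv].
  have [] := pair_bounds (u := u) (v := v) (w := w); by rewrite 1?eq_sym.
have HY1 : (1 + lam) * (1 - 3 * k) * S <= Y.
  rewrite /Y /S mulr_sumr; apply: ler_sum => v hv; rewrite mulr_sumr; apply: ler_sum => w /andP [hwu hwv].
  have [] := pair_bounds (u := u) (v := v) (w := w); by rewrite 1?eq_sym.
have HY2 : Y <= (1 + lam) * S.
  rewrite /Y /S mulr_sumr; apply: ler_sum => v hv; rewrite mulr_sumr; apply: ler_sum => w /andP [hwu hwv].
  have [] := pair_bounds (u := u) (v := v) (w := w); by rewrite 1?eq_sym.
have Spos : 0 < S.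
  have [v [w /and3P [hv hw1 hw2]]] := exists_pair u nL3; rewrite /S.
  have t0 : 0 < \sum_z ep u z * ep v z * ep w z.
    rewrite s_eq; apply: divr_gt0.
      by apply: mulr_gt0; [apply: mulr_gt0; [apply: mulr_gt0|]; apply: wLpos | apply: MRpos].
    by apply: mulr_gt0; apply: exprn_gt0 => //; apply: MRpos.
  apply: (lt_le_trans t0).
  apply: (@ge_sum1P _ _ (fun v => v != u) (fun v => \sum_(w | (w != u) && (w != v)) \sum_z ep u z * ep v z * ep w z) v) => //.
    by move=> v' _; apply: sumr_ge0 => w' _; apply: sge0.
  apply: (@ge_sum1P _ _ (fun w => (w != u) && (w != v)) (fun w => \sum_z ep u z * ep v z * ep w z) w) => //.
  all: try (by move=> w' _; apply: sge0).
  by rewrite hw1 hw2.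
clearbody lam.
have k3 : 1/4 <= 1 - 3 * k by have := k4; lra.
have Ypos : 0 < Y.
  apply: lt_le_trans HY1; apply: mulr_gt0 => //; apply: mulr_gt0; lra.
have hF : 1 / (1 + lam) * (1 + lam) = 1 by rewrite mulrC mulrA mulr1 divff // gt_eqF //; lra.
have F0 : 0 < 1 / (1 + lam) by apply: divr_gt0; lra.
set F := 1 / (1 + lam) in hF F0 *.
have X0 : 0 <= X by apply: le_trans HX2; apply: mulr_ge0; have := k4; lra.
have kl : 0 <= k * lam by apply: mulr_ge0.
rewrite ler_norml; apply/andP; split.
  have : F - 16 * k <= X / Y; last by lra.
  rewrite ler_pdivlMr //.
  case: (lerP (F - 16 * k) 0) => hF0.
    by apply: le_trans X0; apply: mulr_le0_ge0 => //; exact: ltW.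
  apply: le_trans HX2.
  apply: le_trans (ler_wpM2l (ltW hF0) HY2) _.
  rewrite mulrA; apply: ler_wpM2r; first exact: ltW.
  have -> : (F - 16 * k) * (1 + lam) = 1 - 16 * k * (1 + lam).
    by rewrite mulrBl hF; ring.
  have : 0 <= k * (1 + lam) by apply: mulr_ge0 => //; lra.
  have := k0; lra.
have : X / Y <= F + 16 * k; last by lra.
rewrite ler_pdivrMr //.
apply: le_trans HX1 _.
apply: le_trans _ (ler_wpM2l _ HY1); last by have := k0; lra.
have -> : (F + 16 * k) * ((1 + lam) * (1 - 3 * k) * S) = ((F + 16 * k) * (1 + lam)) * (1 - 3 * k) * S by ring.
apply: ler_wpM2r; first exact: ltW.
have -> : (F + 16 * k) * (1 + lam) = 1 + 16 * k * (1 + lam).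
  by rewrite mulrDl hF; ring.
have H1 : 0 <= k * (1 + lam) * (1 - 3 * k - 1/4) by apply: mulr_ge0; [apply: mulr_ge0 => //; lra | lra].
have := k0; nra.
Qed.

End Inst.

Lemma asym (R : realType) (d th : R) : 0 < d -> 0 < th ->
  exists N : nat, forall n : nat, (N <= n)%N -> (n%:R `^ (1 / 2 - d)) ^+ 2 / n%:R <= th.
Proof.
move=> d0 th0.
set e := 2 * d.
have e0 : 0 < e by rewrite /e; lra.
set M := th^-1.
have M0 : 0 < M by rewrite /M invr_gt0.
set y := M `^ (e^-1).
have y0 : 0 <= y by apply: powR_ge0.
exists (Num.truncn y).+1 => n hn.
have ny : y <= n%:R.
  apply: ltW; apply: lt_le_trans (Num.Theory.truncnS_gt y) _.
  by rewrite ler_nat.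
have n0 : 0 < n%:R :> R.
  by rewrite ltr0n; apply: leq_trans hn.
have E1 : (n%:R `^ (1 / 2 - d)) ^+ 2 / n%:R = (n%:R `^ e)^-1.
  rewrite -powR_mulrn; last exact: powR_ge0.
  rewrite -powRrM -{2}(powRr1 (ltW n0)) -powRB; last by apply/implyP => _; rewrite gt_eqF.
  have -> : (1 / 2 - d) * 2 - 1 = - e by rewrite /e; field.
  by rewrite powRN.
rewrite E1.
have ye : y `^ e = M.
  by rewrite /y -powRrM mulVf ?gt_eqF // powRr1 // ltW.
have ne : M <= n%:R `^ e.
  rewrite -ye; apply: ge0_ler_powR => //; first exact: ltW.
  by rewrite nnegrE ltW.
have ne0 : 0 < n%:R `^ e by apply: powR_gt0.
rewrite -div1r ler_pdivrMr //.
have : th * M = 1 by rewrite /M mulfV // gt_eqF.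
have : th * M <= th * n%:R `^ e by apply: ler_wpM2l => //; exact: ltW.
lra.
Qed.

Unset Implicit Arguments.
Theorem mainTheorem10 (R : realType) (nL nR : nat -> nat)
  (wL : forall k, 'I_(nL k) -> R) (wR : forall k, 'I_(nR k) -> R)
  (delta : R) :
  (forall m : nat, exists N : nat, forall k, (N <= k)%N -> (m <= nL k)%N /\ (m <= nR k)%N) ->
  (forall k i, 0 < wL k i) -> (forall k j, 0 < wR k j) ->
  (forall k i j, wL k i * wR k j / ((nR k)%:R * MR (wR k) 1) <= 1) ->
  1 / 10 < delta ->
  (exists c : R, exists N : nat, forall k, (N <= k)%N ->
     (forall i, wL k i <= c * ((nR k)%:R `^ (1 / 2 - delta))) /\
     (forall j, wR k j <= c * ((nR k)%:R `^ (1 / 2 - delta)))) ->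
  (exists c : R, 0 < c /\ exists N : nat, forall k, (N <= k)%N ->
     forall i, c <= wL k i) ->
  (exists c : R, exists N : nat, forall k, (N <= k)%N ->
     MR (wR k) 2 <= c * (MR (wR k) 1) ^+ 2) ->
  (exists c : R, exists N : nat, forall k, (N <= k)%N ->
     MR (wR k) 4 <= c * ((nR k)%:R `^ (1 - 2 * delta))) ->
  forall u : forall k, 'I_(nL k),
  forall eps : R, 0 < eps -> exists N : nat, forall k, (N <= k)%N ->
    `| clustering (wL k) (wR k) (u k)
       - 1 / (1 + (MR (wR k) 2) ^+ 2 / (MR (wR k) 3 * MR (wR k) 1) * wL k (u k)) |
    < eps.
Proof.
move=> Hinf wLp wRp A1 hd [cW [N1 HW]] _ [cM [N2 HM]] _ u eps heps.
set kap := Num.min (1 / 4) (eps / 32).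
have kap0 : 0 < kap by rewrite /kap lt_min; apply/andP; split; lra.
have kap4 : kap <= 1 / 4 by rewrite /kap ge_min lexx.
have kape : kap <= eps / 32 by rewrite /kap ge_min lexx orbT.
set C := cW ^+ 2 * `|cM| + 1.
have C0 : 0 < C.
  have : 0 <= cW ^+ 2 * `|cM| by apply: mulr_ge0; [apply: sqr_ge0 | apply: normr_ge0].
  rewrite /C; lra.
have d0 : 0 < delta by lra.
have [N3 HN3] := asym d0 (divr_gt0 (exprn_gt0 2 kap0) C0).
have [N4 HN4] := Hinf (3 + N3)%N.
exists (N1 + N2 + N4)%N => k hk.
have hk1 : (N1 <= k)%N by lia.
have hk2 : (N2 <= k)%N by lia.
have hk4 : (N4 <= k)%N by lia.
have [nL3' nR3] := HN4 k hk4.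
have nL3 : (3 <= nL k)%N by lia.
have nR0 : (0 < nR k)%N by lia.
have [HWL _] := HW k hk1.
have HM2 := HM k hk2.
have HP := HN3 (nR k) (ltac:(lia)).
have n0 : 0 < (nR k)%:R :> R by rewrite ltr0n.
have M1 : 0 < MR (wR k) 1 := MR1_pos (wRp k) (Ordinal nR0).
have Bnd : forall x y, wL k x * wL k y * MR (wR k) 2 / ((nR k)%:R * MR (wR k) 1 ^+ 2) <= kap ^+ 2.
  move=> x y.
  set P := (nR k)%:R `^ (1 / 2 - delta) in HWL HP *.
  have X0 : 0 <= wL k x * wL k y by apply: mulr_ge0; apply: ltW.
  have hxy : wL k x * wL k y <= (cW * P) ^+ 2.
    by rewrite expr2; apply: ler_pM; [apply: ltW; apply: wLp | apply: ltW; apply: wLp | apply: HWL | apply: HWL].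
  have D0 : 0 < (nR k)%:R * MR (wR k) 1 ^+ 2 by apply: mulr_gt0 => //; apply: exprn_gt0.
  have M20 : 0 <= MR (wR k) 2.
    by apply: divr_ge0; [apply: sumr_ge0 => z _; apply: sqr_ge0 | apply: ltW].
  have Q0 : 0 <= MR (wR k) 2 / ((nR k)%:R * MR (wR k) 1 ^+ 2) by apply: divr_ge0 => //; apply: ltW.
  have hQ : MR (wR k) 2 / ((nR k)%:R * MR (wR k) 1 ^+ 2) <= cM / (nR k)%:R.
    rewrite ler_pdivrMr //.
    rewrite (_ : cM / (nR k)%:R * ((nR k)%:R * MR (wR k) 1 ^+ 2) = cM * MR (wR k) 1 ^+ 2) //.
    by field; rewrite gt_eqF.
  rewrite -mulrA.
  apply: le_trans (ler_pM X0 Q0 hxy hQ) _.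
  rewrite (_ : (cW * P) ^+ 2 * (cM / (nR k)%:R) = cW ^+ 2 * cM * (P ^+ 2 / (nR k)%:R)); last first.
    by rewrite exprMn; field; rewrite gt_eqF.
  have PP : 0 <= P ^+ 2 / (nR k)%:R by apply: divr_ge0; [apply: sqr_ge0 | apply: ltW].
  have c1 : cW ^+ 2 * cM <= C.
    have : cW ^+ 2 * cM <= cW ^+ 2 * `|cM| by apply: ler_wpM2l; [apply: sqr_ge0 | apply: ler_norm].
    rewrite /C; lra.
  apply: le_trans (ler_wpM2r PP c1) _.
  apply: le_trans (ler_wpM2l (ltW C0) HP) _.
  by rewrite mulrC divfK // gt_eqF.
have := inst (wLp k) (wRp k) nR0 (A1 k) (ltW kap0) kap4 Bnd nL3 (u k).
lra.
Qed.
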